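(* For all arbitrarily large integers $n$ and $y$ such that $n=\sum_{i=0}^h y^i$ for some integer $h\ge0$, there exists a trie $\mathcal T$ with $n$ nodes and height $h$ such that (1) $n\mathcal H_k(\mathcal T)=0$ for every integer $k\ge1$, and (2) $(n-1)\mathcal H^{label}_k(\mathcal T)\ge (n-1)\log y$ for every integer $k\ge0$.
   Context: A trie over a finite totally ordered alphabet $\Sigma$ is a rooted ordered tree with edges labeled by symbols of $\Sigma$ such that edges leaving the same node have distinct labels and siblings are ordered by their incoming labels; its height is the maximum depth of a node (root has depth 0). For node $u$: $out(u)$ is the set of labels of edges leaving $u$; $\lambda(u)$ is the label of the edge entering $u$, with $\lambda(\text{root})=\#\notin\Sigma$; $\pi(u)$ is the parent, $\pi(\text{root})=\text{root}$; $\lambda_0(u)=\epsilon$, $\lambda_k(u)=\lambda_{k-1}(\pi(u))\cdot\lambda(u)$. For a length-$k$ string $w$ and $c\in\Sigma$: $n_w=|\{u:\lambda_k(u)=w\}|$, $n_{w,c}=|\{u:\lambda_k(u)=w,\ c\in out(u)\}|$. Logs base 2, $0\log(x/0)=0$. $\mathcal H_k(\mathcal T)=\sum_{w}\sum_{c\in\Sigma}\left[\frac{n_{w,c}}{n}\log\frac{n_w}{n_{w,c}}+\frac{n_w-n_{w,c}}{n}\log\frac{n_w}{n_w-n_{w,c}}\right]$ over contexts $w$ with $n_w>0$. For a string $X$ of length $\ell>0$ with $\ell_c$ occurrences of $c$, $\mathcal H_0(X)=\sum_c\frac{\ell_c}{\ell}\log\frac{\ell}{\ell_c}$ (and $0$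 for the empty string). $cover(w)$ is the concatenation (any order) of the labels of all edges leaving nodes $u$ with $\lambda_k(u)=w$, and $(n-1)\mathcal H^{label}_k(\mathcal T)=\sum_w|cover(w)|\,\mathcal H_0(cover(w))$. *)

(* Defs.v *)
From mathcomp Require Import all_boot all_order all_algebra.
From mathcomp Require Import reals exp.
Set Implicit Arguments. Unset Strict Implicit. Unset Printing Implicit Defensive.
Import Order.TTheory GRing.Theory Num.Theory.
Local Open Scope ring_scope.

(* A trie over alphabet [T] is represented by its (duplicate-free) list of
   nodes, each node being the word of edge labels on the path from the root
   (root = [::], children of [u] are [rcons u c]).  Siblings automatically have distinct labels, and the
   sibling order is the order of the labels. *)
Section Trie.
Variable T : finType.

Definition parent (u : seq T) : seq T := take (size u).-1 u.

Definition is_trie (N : seq (seq T)) : bool :=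
  [&& uniq N, [::] \in N & all (fun u => parent u \in N) N].

Definition height (N : seq (seq T)) : nat := \max_(u <- N) size u.

Definition out (N : seq (seq T)) (u : seq T) : seq T :=
  [seq c <- enum T | rcons u c \in N].

(* lambda(u): label of the incoming edge, None = '#' for the root *)
Definition lam (u : seq T) : option T :=
  if u is x :: s then Some (last x s) else None.

Fixpoint ctx (k : nat) (u : seq T) : seq (option T) :=
  if k is k'.+1 then rcons (ctx k' (parent u)) (lam u) else [::].

Definition nw (N : seq (seq T)) k (w : seq (option T)) : nat :=
  count (fun u => ctx k u == w) N.
Definition nwc (N : seq (seq T)) k (w : seq (option T)) (c : T) : nat :=
  count (fun u => (ctx k u == w) && (c \in out N u)) N.

Definition contexts (N : seq (seq T)) k : seq (seq (option T)) :=
  undup (map (ctx k) N).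

Variable R : realType.

Definition log2 (x : R) : R := ln x / ln 2.

Definition xlogterm (a b : nat) : R :=
  if a == 0%N then 0 else a%:R * log2 (b%:R / a%:R).

Definition Hk (N : seq (seq T)) (k : nat) : R :=
  \sum_(w <- contexts N k) \sum_(c : T)
     (xlogterm (nwc N k w c) (nw N k w) / (size N)%:R
      + xlogterm (nw N k w - nwc N k w c) (nw N k w) / (size N)%:R).

Definition H0 (X : seq T) : R :=
  if size X == 0%N then 0
  else \sum_(c : T) xlogterm (count_mem c X) (size X) / (size X)%:R.

Definition cover (N : seq (seq T)) k (w : seq (option T)) : seq T :=
  flatten [seq out N u | u <- N & ctx k u == w].

(* (n-1) H^label_k(T) *)
Definition labelHk_times (N : seq (seq T)) (k : nat) : R :=
  \sum_(w <- contexts N k) (size (cover N k w))%:R * H0 (cover N k w).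
End Trie.

(* Main.v *)
Require Import Defs.
From mathcomp Require Import reals exp.
From mathcomp Require Import all_boot all_order all_algebra.
From mathcomp Require Import zify.
Set Implicit Arguments. Unset Strict Implicit.

Definition sz y h := (h.+1 * y)%N.
Definition lev y h m : seq 'I_(sz y h) := [seq c <- enum 'I_(sz y h) | (val c %/ y == m)%N].
Fixpoint L y h m : seq (seq 'I_(sz y h)) :=
  if m is m'.+1 then [seq rcons u c | u <- L y h m', c <- lev y h m'] else [:: [::]].
Fixpoint NN y h K := if K is K'.+1 then NN y h K' ++ L y h K else L y h 0.

Lemma count_div y K m : (0 < y)%N ->
  count (fun c : nat => c %/ y == m)%N (iota 0 (K * y)) = if (m < K)%N then y else 0%N.
Proof.
move=> y0; elim: K => [|K IH]; first by rewrite mul0n.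
rewrite mulSn addnC iotaD count_cat IH add0n.
rewrite (eq_in_count (a2 := fun _ => K == m)); last first.
  move=> c; rewrite mem_iota => /andP [c1 c2].
  have -> : (c %/ y = K)%N.
    apply/eqP; rewrite eqn_leq -ltnS ltn_divLR // leq_divRL //.
    apply/andP; split; lia.
  by [].
case: (K =P m) => [->|Km] /=.
  by rewrite ltnn ltnSn count_predT size_iota.
rewrite count_pred0 addn0 ltnS (leq_eqVlt m K).
by move/eqP: Km; rewrite eq_sym => /negbTE ->.
Qed.

Section Con.
Context (y h : nat) (y0 : (0 < y)%N).

Lemma size_lev m : size (lev y h m) = if (m < h.+1)%N then y else 0%N.
Proof.
rewrite size_filter -(@count_div y h.+1 m y0).
have := count_map val (fun c : nat => c %/ y == m)%N (enum 'I_(sz y h)).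
by rewrite val_enum_ord => ->.
Qed.

Lemma mem_lev m c : (c \in lev y h m) = (val c %/ y == m)%N.
Proof. by rewrite mem_filter mem_enum andbT. Qed.

Lemma uniq_lev m : uniq (lev y h m).
Proof. by rewrite filter_uniq ?enum_uniq. Qed.

Lemma sizeL m u : u \in L y h m -> size u = m.
Proof.
elim: m u => [|m IH] u /=; first by rewrite mem_seq1 => /eqP ->.
by case/allpairsP => [[v c] [/= /IH Hv _ ->]]; rewrite size_rcons Hv.
Qed.

Lemma memLS m u : u \in L y h m.+1 ->
  exists v c, [/\ v \in L y h m, (val c %/ y == m)%N & u = rcons v c].
Proof.
by case/allpairsP => [[v c] [/= Hv Hc ->]]; exists v, c; rewrite -mem_lev.
Qed.

Lemma LS_mem m v c : v \in L y h m -> (val c %/ y == m)%N -> rcons v c \in L y h m.+1.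
Proof.
move=> Hv Hc /=; apply/allpairsP; exists (v, c); split => //=.
by rewrite mem_lev.
Qed.

Lemma uniqL m : uniq (L y h m).
Proof.
elim: m => [|m IH] //=; apply: allpairs_uniq => //; first exact: uniq_lev.
by move=> [v c] [v' c'] _ _ /= /rcons_inj [-> ->].
Qed.

Lemma size_L m : (m <= h)%N -> size (L y h m) = (y ^ m)%N.
Proof.
elim: m => [|m IH] // mh /=.
by rewrite size_allpairs IH ?(ltnW mh) // size_lev ltnS (ltnW mh) expnSr.
Qed.

Lemma memNN K u : u \in NN y h K -> exists2 m, (m <= K)%N & u \in L y h m.
Proof.
elim: K => [|K IH] /=; first by move=> H; exists 0%N.
rewrite mem_cat => /orP [/IH [m mK Hm]|Hu]; first by exists m => //; apply: leqW.
by exists K.+1.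
Qed.

Lemma NN_mem K m u : (m <= K)%N -> u \in L y h m -> u \in NN y h K.
Proof.
elim: K => [|K IH] /=; first by rewrite leqn0 => /eqP ->.
rewrite leq_eqVlt ltnS mem_cat => /orP [/eqP -> ->|/IH H /H ->] //.
by rewrite orbT.
Qed.

Lemma uniqNN K : uniq (NN y h K).
Proof.
elim: K => [|K IH]; first by [].
change (uniq (NN y h K ++ L y h K.+1)).
rewrite cat_uniq IH uniqL andbT; apply/hasPn => u /sizeL Hu.
apply/negP => /memNN [m mK /sizeL]; rewrite Hu => Hm; move: mK; rewrite -Hm.
by rewrite ltnn.
Qed.

Lemma sizeNN K : (K <= h)%N -> size (NN y h K) = (\sum_(i < K.+1) y ^ i)%N.
Proof.
elim: K => [|K IH] Kh; first by rewrite big_ord1.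
change (size (NN y h K ++ L y h K.+1) = \sum_(i < K.+2) y ^ i)%N.
by rewrite size_cat IH ?(ltnW Kh) // size_L // (big_ord_recr K.+1).
Qed.

Lemma sum_NN K (g : nat -> nat) :
  (\sum_(u <- NN y h K) g (size u) = \sum_(m < K.+1) size (L y h m) * g m)%N.
Proof.
have HL m : (\sum_(u <- L y h m) g (size u) = size (L y h m) * g m)%N.
  rewrite big_seq (eq_bigr (fun _ => g m)); last by move=> u /sizeL ->.
  by rewrite -big_seq big_const_seq count_predT iter_addn_0 mulnC.
elim: K => [|K IH]; first by rewrite big_ord1 -HL.
change (\sum_(u <- NN y h K ++ L y h K.+1) g (size u) = \sum_(m < K.+2) size (L y h m) * g m)%N.
by rewrite big_cat IH HL (big_ord_recr K.+1).
Qed.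

Lemma lam_rcons (T : finType) (v : seq T) c : lam (rcons v c) = Some c.
Proof. by case: v => //= x v; rewrite last_rcons. Qed.

Lemma parent_rcons (T : finType) (v : seq T) c : parent (rcons v c) = v.
Proof. by rewrite /parent size_rcons /= -cats1 take_size_cat. Qed.

Definition dep (o : option 'I_(sz y h)) := if o is Some c then ((val c %/ y).+1)%N else 0%N.

Lemma size_lam u : u \in NN y h h -> size u = dep (lam u).
Proof.
case/memNN => [[|m] _ Hu].
  by move: Hu; rewrite /= mem_seq1 => /eqP ->.
case/memLS: Hu => v [c [Hv /eqP Hc ->]].
by rewrite lam_rcons /= Hc size_rcons (sizeL Hv).
Qed.

Lemma outE u : u \in NN y h h ->
  out (NN y h h) u = [seq c <- enum 'I_(sz y h) | (size u < h)%N && (val c %/ y == size u)%N].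
Proof.
case/memNN => m mh Hu; rewrite /out; apply: eq_in_filter => c _.
apply/idP/idP.
  case/memNN => m' m'h; case: m' m'h => [|m'] m'h.
    by rewrite /= mem_seq1 => /eqP /(congr1 size); rewrite size_rcons.
  case/memLS => v [c' [Hv Hc E]].
  move: (E) => /rcons_inj [Euv ->]; rewrite Euv (sizeL Hv) Hc andbT.
  by apply: leq_trans m'h.
case/andP => Hs Hc; apply: (NN_mem (m := (size u).+1)) => //.
by apply: LS_mem => //; rewrite (sizeL Hu).
Qed.

End Con.

Import Order.TTheory GRing.Theory Num.Theory.

Section Gen.
Variable T : finType.

Lemma sum_count_mem (X : seq T) : (\sum_(c : T) count_mem c X)%N = size X.
Proof.
elim: X => [|x X IH] /=; first by rewrite big1.
rewrite big_split /= IH -add1n; congr (_ + _)%N.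
rewrite (bigD1 x) //= eqxx big1 // => c /negbTE; by rewrite eq_sym => ->.
Qed.

Lemma partition_sum (A : eqType) (f : seq T -> A) (N : seq (seq T)) (F : seq T -> nat) :
  (\sum_(w <- undup (map f N)) \sum_(u <- N | f u == w) F u = \sum_(u <- N) F u)%N.
Proof.
under eq_bigr do rewrite big_mkcond /=.
rewrite exchange_big /=; apply: eq_big_seq => u uN.
rewrite -big_mkcond /= big_const_seq.
have -> : count (fun w => f u == w) (undup (map f N)) = 1%N.
  rewrite (eq_count (a2 := pred1 (f u))); last by move=> w; rewrite /= eq_sym.
  by rewrite count_uniq_mem ?undup_uniq // mem_undup map_f.
by rewrite /= addn0.
Qed.

Variable R : realType.
Local Open Scope ring_scope.

Lemma xlogterm_diag (a : nat) : xlogterm R a a = 0.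
Proof.
rewrite /xlogterm; case: eqP => // /eqP a0.
by rewrite divff ?pnatr_eq0 // /log2 ln1 mul0r mulr0.
Qed.

Lemma xlogterm_0 b : xlogterm R 0 b = 0.
Proof. by rewrite /xlogterm eqxx. Qed.

Lemma H0_ge (y : nat) (X : seq T) : (1 <= y)%N ->
  (forall c, y * count_mem c X <= size X)%N ->
  (size X)%:R * @log2 R y%:R <= (size X)%:R * H0 R X.
Proof.
move=> y1 Hc; rewrite /H0; case: eqP => [->|/eqP X0]; first by rewrite !mul0r.
have Xpos : (0 : R) < (size X)%:R by rewrite ltr0n lt0n.
rewrite mulr_sumr.
rewrite (eq_bigr (fun c => xlogterm R (count_mem c X) (size X))); last first.
  by move=> c _; rewrite mulrC divfK // gt_eqF.
rewrite -{1}(sum_count_mem X) natr_sum mulr_suml.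
apply: ler_sum => c _; rewrite /xlogterm; case: eqP => [->|/eqP c0].
  by rewrite mul0r.
rewrite ler_pM2l ?ltr0n ?lt0n // /log2 ler_pM2r ?invr_gt0 ?ln_gt0 ?ltr1n //.
have cpos : (0:R) < (count_mem c X)%:R by rewrite ltr0n lt0n.
have ypos : (0:R) < y%:R by rewrite ltr0n.
rewrite ler_ln ?posrE ?divr_gt0 //.
by rewrite ler_pdivlMr // -natrM ler_nat Hc // -lt0n.
Qed.
End Gen.

Local Open Scope ring_scope.

Theorem proposition1 (R : realType) (n y h : nat) :
  (1 <= y)%N -> n = (\sum_(i < h.+1) y ^ i)%N ->
  exists (s : nat) (N : seq (seq 'I_s)),
    (0 < s)%N /\ is_trie N /\ size N = n /\ height N = h /\
    (forall k : nat, (1 <= k)%N -> n%:R * Hk R N k = 0) /\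
    (forall k : nat, (n - 1)%N%:R * log2 y%:R <= labelHk_times R N k).
Proof.
move=> y1 ->.
set N := NN y h h.
have outE' u : u \in N -> out N u = if (size u < h)%N then lev y h (size u) else [::].
  move=> uN; rewrite outE //; case: ifP => _ //=.
  by rewrite (eq_filter (a2 := pred0)) ?filter_pred0.
have outctx k u v : (1 <= k)%N -> u \in N -> v \in N -> ctx k u = ctx k v ->
    out N u = out N v.
  case: k => [|k] // _ uN vN /= /rcons_inj [_ E].
  by rewrite !outE // (size_lam uN) (size_lam vN) E.
exists (sz y h), N.
split; first by rewrite /sz muln_gt0 y1.
split.
  rewrite /is_trie uniqNN /=; apply/andP; split.
    by apply: (NN_mem (m := 0%N)).
  apply/allP => u /[dup] uN /memNN [[|m] mh Hu].
    by move: Hu; rewrite inE => /eqP ->; apply: (NN_mem (m := 0%N)).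
  case/memLS: Hu => v [c [Hv _ ->]]; rewrite parent_rcons.
  exact: (NN_mem (ltnW mh) Hv).
split; first by rewrite sizeNN.
split.
  rewrite /height; apply/eqP; rewrite eqn_leq; apply/andP; split.
    by apply/bigmax_leqP_seq => u /memNN [m mh /sizeL ->].
  have Hs := @size_L y h y1 h (leqnn h).
  case E: (L y h h) Hs => [|u s] Hs.
    by move: Hs => /= /esym /eqP; rewrite expn_eq0 eqn0Ngt y1.
  have uL : u \in L y h h by rewrite E mem_head.
  apply: (bigmaxn_sup_seq u) => //; first exact: (NN_mem (leqnn h) uL).
  by rewrite (sizeL uL).
split.
  move=> k k1; suff -> : Hk R N k = 0 by rewrite mulr0.
  rewrite /Hk big1_seq // => w /andP [_ wC].
  move: wC; rewrite mem_undup => /mapP [u0 u0N ->].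
  apply: big1 => c _.
  have Hnwc : nwc N k (ctx k u0) c = if c \in out N u0 then nw N k (ctx k u0) else 0%N.
    rewrite /nwc /nw (eq_in_count (a2 := fun u => (ctx k u == ctx k u0) && (c \in out N u0))); last first.
      move=> u uN /=; case: eqP => //= E; by rewrite (outctx k u u0).
    case: (c \in out N u0).
      by apply: eq_count => u; rewrite andbT.
    by rewrite (eq_count (a2 := pred0)) ?count_pred0 // => u; rewrite andbF.
  rewrite Hnwc; case: ifP => _; rewrite ?subnn ?subn0 xlogterm_diag xlogterm_0 mul0r ?addr0 ?add0r //.
move=> k.
have Hsize w : size (Defs.cover N k w) = (\sum_(u <- N | ctx k u == w) size (out N u))%N.
  by rewrite /Defs.cover size_flatten /shape -map_comp sumnE big_map big_filter.
have Hcount w c : (y * count_mem c (Defs.cover N k w) <= size (Defs.cover N k w))%N.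
  rewrite Hsize /Defs.cover count_flatten sumnE !big_map big_filter big_distrr /=.
  rewrite big_seq_cond [X in (_ <= X)%N]big_seq_cond; apply: leq_sum => u /andP [uN _].
  rewrite outE' //; case: ifP => Hs; last by rewrite /= muln0.
  rewrite count_uniq_mem ?uniq_lev // size_lev // (_ : (size u < h.+1)%N) //; last by rewrite ltnS ltnW.
  by case: (c \in _); rewrite ?muln1 ?muln0.
have Hsum : (\sum_(w <- contexts N k) size (Defs.cover N k w) = (\sum_(i < h.+1) y ^ i) - 1)%N.
  rewrite /contexts; under eq_bigr do rewrite Hsize.
  rewrite partition_sum.
  rewrite big_seq (eq_bigr (fun u => if (size u < h)%N then y else 0%N)); last first.
    move=> u uN; rewrite outE' //; case: ifP => // Hs.
    by rewrite size_lev // (_ : (size u < h.+1)%N) //; last by rewrite ltnS ltnW.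
  rewrite -big_seq.
  transitivity (\sum_(m < h.+1) size (L y h m) * (if (m < h)%N then y else 0%N))%N.
    exact: (@sum_NN y h h (fun m => if (m < h)%N then y else 0%N)).
  rewrite big_ord_recr /= ltnn muln0 addn0 big_ord_recl expn0 addKn.
  apply: eq_bigr => i _ /=.
  by rewrite size_L ?ltn_ord ?(ltnW (ltn_ord i)) // expnS mulnC.
rewrite /labelHk_times.
apply: le_trans (_ : \sum_(w <- contexts N k) (size (Defs.cover N k w))%:R * log2 y%:R <= _).
  by rewrite -mulr_suml -natr_sum Hsum.
apply: ler_sum => w _; apply: H0_ge => //; exact: Hcount.
Qed.
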